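(* Let $P$ be a poset that is both directed and codirected, and let $M\colon P\to\mathbf{Vec}$ be pointwise finite-dimensional with $M_p\neq0$ for all $p\in P$ and with $M(p\le q)\colon M_p\to M_q$ surjective for all $p\le q$. Then $M$ has a direct summand isomorphic to $k_P$.
   Context: $P$ is directed if any two elements have a common upper bound in $P$, codirected if any two elements have a common lower bound in $P$. Persistence modules over $P$ are functors $P\to\mathbf{Vec}$ with structure maps $M(p\le q)$. $k_P$ is the module with $k$ at every point and identity structure maps. *)

(* Defs.v *)
From HB Require Import structures.
From mathcomp Require Import all_boot all_order all_algebra.
Set Implicit Arguments. Unset Strict Implicit. Unset Printing Implicit Defensive.
Import Order.TTheory GRing.Theory.
Local Open Scope ring_scope.

Definition directed (d : Order.disp_t) (P : porderType d) : Prop :=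
  forall p q : P, exists r : P, (p <= r)%O /\ (q <= r)%O.
Definition codirected (d : Order.disp_t) (P : porderType d) : Prop :=
  forall p q : P, exists r : P, (r <= p)%O /\ (r <= q)%O.

(* A pointwise finite-dimensional persistence module over P with values in
   k-vector spaces: finite-dimensionality is built in through vectType. *)
Record pfdmod (k : fieldType) (d : Order.disp_t) (P : porderType d) := PFDMod {
  pm_obj : P -> vectType k;
  pm_map : forall p q : P, (p <= q)%O -> 'Hom(pm_obj p, pm_obj q);
  pm_id : forall (p : P) (h : (p <= p)%O), pm_map h = \1%VF;
  pm_comp : forall (p q r : P) (hpq : (p <= q)%O) (hqr : (q <= r)%O)
              (hpr : (p <= r)%O),
      pm_map hpr = (pm_map hqr \o pm_map hpq)%VF
}.

Definition kP_obj (k : fieldType) (d : Order.disp_t) (P : porderType d)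
  (p : P) : vectType k := k^o.
Definition kP_map (k : fieldType) (d : Order.disp_t) (P : porderType d)
  (p q : P) (h : (p <= q)%O) : 'Hom(kP_obj k p, kP_obj k q) := \1%VF.
Lemma kP_id (k : fieldType) (d : Order.disp_t) (P : porderType d)
  (p : P) (h : (p <= p)%O) : kP_map k h = \1%VF.
Proof. by []. Qed.
Lemma kP_comp (k : fieldType) (d : Order.disp_t) (P : porderType d)
  (p q r : P) (hpq : (p <= q)%O) (hqr : (q <= r)%O) (hpr : (p <= r)%O) :
  kP_map k hpr = (kP_map k hqr \o kP_map k hpq)%VF.
Proof. by rewrite /kP_map comp_lfun1l. Qed.
Definition kP (k : fieldType) (d : Order.disp_t) (P : porderType d)
  : pfdmod k P := PFDMod (@kP_id k d P) (@kP_comp k d P).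

Definition is_morph (k : fieldType) (d : Order.disp_t) (P : porderType d)
  (M N : pfdmod k P) (phi : forall p : P, 'Hom(pm_obj M p, pm_obj N p)) : Prop :=
  forall (p q : P) (h : (p <= q)%O),
    (pm_map N h \o phi p)%VF = (phi q \o pm_map M h)%VF.

Definition is_submod (k : fieldType) (d : Order.disp_t) (P : porderType d)
  (M : pfdmod k P) (N : forall p : P, {vspace pm_obj M p}) : Prop :=
  forall (p q : P) (h : (p <= q)%O), (pm_map M h @: N p <= N q)%VS.

(* M has a direct summand isomorphic to X: there are submodules N, C with
   M = N (+) C pointwise, and a natural isomorphism from X onto N, i.e. a
   morphism X -> M which is pointwise injective with image N. *)
Definition has_summand_iso (k : fieldType) (d : Order.disp_t) (P : porderType d)
  (M X : pfdmod k P) : Prop :=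
  exists (N C : forall p : P, {vspace pm_obj M p})
         (phi : forall p : P, 'Hom(pm_obj X p, pm_obj M p)),
    [/\ is_submod N, is_submod C,
        forall p, (N p + C p)%VS = fullv /\ (N p :&: C p)%VS = 0%VS,
        is_morph phi &
        forall p, lker (phi p) = 0%VS /\ limg (phi p) = N p].

(* Main.v *)
Require Import Defs.
From HB Require Import structures.
From mathcomp Require Import all_boot all_order all_algebra.
From mathcomp Require Import boolp classical_sets.
From mathcomp Require Import zify.
From Stdlib Require Import Lia.
Import Order.TTheory GRing.Theory.
Set Implicit Arguments. Unset Strict Implicit. Unset Printing Implicit Defensive.
Local Open Scope ring_scope.

Lemma ex_max_nat (Q : nat -> Prop) (N n0 : nat) : Q n0 -> (forall n, Q n -> (n <= N)%N) ->
  exists n, Q n /\ forall m, Q m -> (m <= n)%N.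
Proof.
move=> Qn0 QN.
have ex : exists n, `[< Q n >] by exists n0; apply/asboolP.
have bd : forall n, `[< Q n >] -> (n <= N)%N by move=> n /asboolP; apply: QN.
case: (ex_maxnP ex bd) => n /asboolP Qn mx.
by exists n; split => // m Qm; apply: mx; apply/asboolP.
Qed.

Lemma ex_min_nat (Q : nat -> Prop) (n0 : nat) : Q n0 ->
  exists n, Q n /\ forall m, Q m -> (n <= m)%N.
Proof.
move=> Qn0.
have ex : exists n, `[< Q n >] by exists n0; apply/asboolP.
case: (ex_minnP ex) => n /asboolP Qn mx.
by exists n; split => // m Qm; apply: mx; apply/asboolP.
Qed.

Section Lin.
Variables (k : fieldType) (V : vectType k).

Lemma subspace_rep (S : V -> Prop) : S 0 -> (forall x y (l : k), S x -> S y -> S (x + l *: y)) ->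
  exists U : {vspace V}, forall x, S x <-> x \in U.
Proof.
move=> S0 Scl.
have Q0 : exists U : {vspace V}, (forall x, x \in U -> S x) /\ \dim U = 0%N.
  exists 0%VS; split; last by rewrite dimv0.
  by move=> x; rewrite memv0 => /eqP ->.
have QN : forall m, (exists U : {vspace V}, (forall x, x \in U -> S x) /\ \dim U = m) ->
    (m <= \dim (fullv : {vspace V}))%N.
  by move=> m [U [_ <-]]; apply: dimvS; apply: subvf.
have [n [[U [US dU]] mx]] := @ex_max_nat (fun n => exists U : {vspace V}, (forall x, x \in U -> S x) /\ \dim U = n) _ _ Q0 QN.
exists U => x; split; last exact: US.
move=> Sx; apply/negPn/negP => xU.
have US' : forall y, y \in (U + <[x]>)%VS -> S y.
  move=> y /memv_addP [u uU [w /vlineP [l ->] ->]].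
  by rewrite -[u + _]/(u + l *: x); apply: Scl => //; apply: US.
have := mx _ (ex_intro _ _ (conj US' erefl)).
have := dimv_leqif_eq (addvSl U <[x]>).
move=> /ltn_leqif; rewrite dU => lt; rewrite leqNgt lt negbK => /eqP E.
move: xU; rewrite E => /negP; apply.
by apply/memv_addP; exists 0; [apply: mem0v | exists x; [apply: memv_line | rewrite add0r]].
Qed.
Definition affc (B : V -> Prop) :=
  forall x y z (l : k), B x -> B y -> B z -> B (x + l *: (y - z)).

Lemma affine_rep (B : V -> Prop) a : B a -> affc B ->
  exists U : {vspace V}, forall y, B y <-> y - a \in U.
Proof.
move=> Ba affB.
have S0 : B (0 + a) by rewrite add0r.
have Scl : forall x y l, B (x + a) -> B (y + a) -> B (x + l *: y + a).
  move=> x y l Bx By; have := affB _ _ _ l Bx By Ba.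
  by rewrite addrK addrAC.
have [U HU] := @subspace_rep (fun y => B (y + a)) S0 Scl.
exists U => y; rewrite -HU subrK; done.
Qed.

Lemma chain_min (I : Type) (A : I -> Prop) (X : I -> V -> Prop) :
  (forall i, A i -> (exists y, X i y) /\ affc (X i)) ->
  (forall i j, A i -> A j -> (forall y, X i y -> X j y) \/ (forall y, X j y -> X i y)) ->
  (exists i, A i) ->
  exists i0, A i0 /\ forall j, A j -> forall y, X i0 y -> X j y.
Proof.
move=> Xok tot [i Ai].
pose Q n := exists i a (U : {vspace V}), A i /\ (forall y, X i y <-> y - a \in U) /\
    \dim U = n.
have [n0 Qn0] : exists n, Q n.
  have [[y0 Xy0] affX] := Xok i Ai.
  have [U HU] := affine_rep Xy0 affX.
  by exists (\dim U); exists i, y0, U.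
have [n [[i0 [a0 [U0 [Ai0 [H0 dU0]]]]] mn]] := @ex_min_nat Q n0 Qn0.
exists i0; split => // j Aj.
case: (tot i0 j Ai0 Aj) => [//|Xji].
have [[a1 Xa1] affj] := Xok j Aj.
have [U1 H1] := affine_rep Xa1 affj.
have a10 : a1 - a0 \in U0 by apply/H0/Xji.
have sub : (U1 <= U0)%VS.
  apply/subvP => u uU.
  have E : (a1 + u - a0) - (a1 - a0) = u by rewrite opprB addrA subrK addrC addKr.
  rewrite -E; apply: memvB => //; apply/H0/Xji/H1.
  by rewrite addrC addKr.
have dle : (\dim U0 <= \dim U1)%N.
  by rewrite dU0; apply: mn; exists j, a1, U1.
have /eqP EU : U1 == U0 by rewrite eqEdim sub dle.
move=> y /H0 y0; apply/H1; rewrite EU.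
have -> : y - a1 = (y - a0) - (a1 - a0) by rewrite opprB addrA subrK.
by apply: memvB.
Qed.
End Lin.

Section Lim.
Variables (k : fieldType) (d : Order.disp_t) (P : porderType d) (M : pfdmod k P).
Local Notation MO := (pm_obj M).
Local Notation Fm h := (pm_map M h).

Lemma Fm_irr (p q : P) (h1 h2 : (p <= q)%O) : Fm h1 = Fm h2.
Proof. by rewrite (bool_irrelevance h1 h2). Qed.
Lemma Fm_id (p : P) (h : (p <= p)%O) x : Fm h x = x.
Proof. by rewrite pm_id lfunE. Qed.
Lemma Fm_comp (p q r : P) (hpq : (p <= q)%O) (hqr : (q <= r)%O) (hpr : (p <= r)%O) x :
  Fm hpr x = Fm hqr (Fm hpq x).
Proof. by rewrite (pm_comp M hpq hqr hpr) comp_lfunE. Qed.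

Definition sys := forall p : P, MO p -> Prop.
Definition valid0 (B : sys) :=
  [/\ forall p, exists x, B p x, forall p, affc (B p),
      forall p q (h : (p <= q)%O) z, B p z -> B q (Fm h z) &
      forall p q (h : (p <= q)%O) w, B q w -> exists z, B p z /\ Fm h z = w].

Hypothesis codir : codirected P.

Definition Bpr (B : sys) (p : P) (a : MO p) (q : P) (y : MO q) : Prop :=
  exists r (hrp : (r <= p)%O) (hrq : (r <= q)%O) z, B r z /\ Fm hrp z = a /\ Fm hrq z = y.

Arguments Bpr B {p} a q y.

Lemma Bpr_valid (B : sys) (p : P) (a : MO p) : valid0 B -> B p a -> valid0 (Bpr B a).
Proof.
case=> ne aff fw bw Ba; split.
- move=> q; have [r [hrp hrq]] := codir p q.
  have [z [Bz Fz]] := bw _ _ hrp _ Ba.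
  by exists (Fm hrq z), r, hrp, hrq, z.
- move=> q x y z l [r1 [h1p [h1q [z1 [B1 [F1p F1q]]]]]]
    [r2 [h2p [h2q [z2 [B2 [F2p F2q]]]]]] [r3 [h3p [h3q [z3 [B3 [F3p F3q]]]]]].
  have [s [hs1 hs2]] := codir r1 r2.
  have [t [hts hs3]] := codir s r3.
  have ht1 := le_trans hts hs1; have ht2 := le_trans hts hs2.
  have [w1 [Bw1 Fw1]] := bw _ _ ht1 _ B1.
  have [w2 [Bw2 Fw2]] := bw _ _ ht2 _ B2.
  have [w3 [Bw3 Fw3]] := bw _ _ hs3 _ B3.
  have htp := le_trans ht1 h1p; have htq := le_trans ht1 h1q.
  exists t, htp, htq, (w1 + l *: (w2 - w3)); split; first by apply: aff.
  rewrite !linearD !linearZ !linearN /=.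
  rewrite (Fm_comp ht1 h1p htp) (Fm_comp ht2 h2p htp) (Fm_comp hs3 h3p htp).
  rewrite (Fm_comp ht1 h1q htq) (Fm_comp ht2 h2q htq) (Fm_comp hs3 h3q htq).
  rewrite Fw1 Fw2 Fw3 F1p F2p F3p F1q F2q F3q.
  by rewrite !scalerN subrr addr0.
- move=> q q' h y [r [hrp [hrq [z [Bz [Fa Fy]]]]]].
  exists r, hrp, (le_trans hrq h), z; split => //; split => //.
  by rewrite (Fm_comp hrq h) Fy.
- move=> q q' h w [r [hrp [hrq' [z [Bz [Fa Fw]]]]]].
  have [t [htr htq]] := codir r q.
  have [z' [Bz' Fz']] := bw _ _ htr _ Bz.
  exists (Fm htq z'); split.
    exists t, (le_trans htr hrp), htq, z'; split => //; split => //.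
    by rewrite (Fm_comp htr hrp) Fz'.
  rewrite -(Fm_comp htq h (le_trans htr hrq')) (Fm_comp htr hrq') Fz' //.
Qed.

Lemma Bpr_sub (B : sys) (p : P) (a : MO p) (q : P) (y : MO q) : valid0 B -> Bpr B a q y -> B q y.
Proof.
case=> _ _ fw _ [r [hrp [hrq [z [Bz [_ <-]]]]]]; exact: fw.
Qed.

Lemma Bpr_p (B : sys) (p : P) (a y : MO p) : Bpr B a p y -> y = a.
Proof.
by case=> [r [hrp [hrq [z [_ [<- <-]]]]]]; rewrite (Fm_irr hrp hrq).
Qed.

Lemma Bpr_a (B : sys) (p : P) (a : MO p) : B p a -> Bpr B a p a.
Proof.
by move=> Ba; exists p, (lexx p), (lexx p), a; rewrite Fm_id.
Qed.

Hypothesis surj : forall (p q : P) (h : (p <= q)%O) (w : MO q), exists v, Fm h v = w.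

Lemma limit_exists (p0 : P) (x0 : MO p0) : exists v : forall p, MO p,
  (forall p q (h : (p <= q)%O), Fm h (v p) = v q) /\ v p0 = x0.
Proof.
have full : valid0 (fun p (_ : MO p) => True).
  split => //.
  - by move=> p; exists 0.
  - by move=> p q h w _; have [v Fv] := surj h w; exists v.
pose T := {B : sys | valid0 B /\ forall y, B p0 y -> y = x0}.
have t0 : T.
  exists (Bpr (fun p (_ : MO p) => True) x0); split.
    exact: Bpr_valid.
  by move=> y; apply: Bpr_p.
pose R (s t : T) := `[< forall p y, sval t p y -> sval s p y >].
have Rrefl : forall s, R s s by move=> s; apply/asboolP.
have Rtrans : forall r s t, R r s -> R s t -> R r t.
  by move=> r s t /asboolP H1 /asboolP H2; apply/asboolP => p y /H2 /H1.
have Rchain : forall A : set T, total_on A (fun x y => R x y) ->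
    exists t, forall s, A s -> R s t.
  move=> A totA.
  case: (pselect (exists s, A s)) => [[s0 As0] | nA]; last first.
    by exists t0 => s As; exfalso; apply: nA; exists s.
  pose I : sys := fun p y => forall s, A s -> sval s p y.
  have mins : forall p, exists i0, A i0 /\ forall j, A j -> forall y, sval i0 p y -> sval j p y.
    move=> p; apply: (@chain_min _ _ T A (fun s => sval s p)); last by exists s0.
    - move=> i _; have [[ne aff _ _] _] := svalP i; split; [exact: ne | exact: aff].
    - move=> i j Ai Aj; case: (totA i j Ai Aj) => /asboolP H; [right|left]; exact: H.
  have vI : valid0 I.
    split.
    - move=> p; have [i0 [Ai0 Hi0]] := mins p.
      have [[ne _ _ _] _] := svalP i0; have [y Hy] := ne p.
      by exists y => j Aj; apply: Hi0.
    - move=> p x y z l Ix Iy Iz j Aj; have [[_ aff _ _] _] := svalP j.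
      by apply: aff; [apply: Ix | apply: Iy | apply: Iz].
    - move=> p q h z Iz j Aj; have [[_ _ fw _] _] := svalP j; by apply: fw; apply: Iz.
    - move=> p q h w Iw.
      have [ip [Aip Hip]] := mins p; have [iq [Aiq Hiq]] := mins q.
      have key : forall D, A D -> (forall j, A j -> forall y, sval D p y -> sval j p y) ->
          (forall j, A j -> forall y, sval D q y -> sval j q y) ->
          exists z, I p z /\ Fm h z = w.
        move=> D AD Dp Dq; have [[_ _ _ bw] _] := svalP D.
        have [z [Dz Fz]] := bw _ _ h _ (Iw D AD).
        by exists z; split => // j Aj; apply: Dp.
      case: (totA ip iq Aip Aiq) => /asboolP H.
      + apply: (key iq Aiq) => // j Aj y /H; exact: Hip.
      + apply: (key ip Aip) => // j Aj y /H; exact: Hiq.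
  have cI : forall y, I p0 y -> y = x0.
    by move=> y Iy; have [_ c] := svalP s0; apply: c; apply: Iy.
  exists (exist _ I (conj vI cI)) => s As; apply/asboolP => p y Iy; exact: Iy s As.
have [t tmax] := @ZL_preorder T t0 R Rrefl Rtrans Rchain.
have [vt ct] := svalP t.
have single : forall p a y, sval t p a -> sval t p y -> y = a.
  move=> p a y ta ty.
  have cs : forall y, Bpr (sval t) a p0 y -> y = x0.
    by move=> y' H; apply: ct; apply: Bpr_sub H.
  pose s : T := exist _ (Bpr (sval t) a) (conj (Bpr_valid vt ta) cs).
  have Rts : R t s by apply/asboolP => q z Hz; apply: Bpr_sub Hz.
  have /asboolP Rst := tmax s Rts.
  by apply: Bpr_p; apply: Rst.
have [ne _ fw _] := vt.
pose v p := sval (cid (ne p)).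
have vt' : forall p, sval t p (v p) by move=> p; exact: (svalP (cid (ne p))).
exists v; split.
  by move=> p q h; apply: single => //; apply: fw.
by apply: ct.
Qed.

End Lim.

Definition scv (k : fieldType) (V : vectType k) (v : V) (a : k^o) : V := a *: v.
Arguments scv {k V} v a.
Lemma scv_lin (k : fieldType) (V : vectType k) (v : V) : linear (scv v).
Proof. by move=> a x y; rewrite /scv scalerDl scalerA. Qed.
HB.instance Definition _ (k : fieldType) (V : vectType k) (v : V) :=
  GRing.isLinear.Build k k^o V *:%R (scv v) (@scv_lin k V v).

Section Main.
Variables (k : fieldType) (d : Order.disp_t) (P : porderType d) (M : pfdmod k P).
Local Notation MO := (pm_obj M).
Local Notation Fm h := (pm_map M h).
Hypothesis dir : directed P.
Hypothesis codir : codirected P.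
Hypothesis surj : forall (p q : P) (h : (p <= q)%O) (w : MO q), exists v, Fm h v = w.

Definition dimM (p : P) := \dim (fullv : {vspace MO p}).

Lemma limg_full (p q : P) (h : (p <= q)%O) : limg (Fm h) = fullv.
Proof.
apply/eqP; rewrite eqEsubv subvf /=; apply/subvP => w _.
by have [v <-] := surj h w; apply: memv_img; apply: memvf.
Qed.

Lemma dim_eq (p q : P) (h : (p <= q)%O) : (\dim (lker (Fm h)) + dimM q)%N = dimM p.
Proof.
by have := limg_ker_dim (Fm h) fullv; rewrite capfv limg_full.
Qed.

Lemma inj_min (r t : P) (h : (r <= t)%O) : (forall q, dimM r <= dimM q)%N -> injective (Fm h).
Proof.
move=> mr; apply/lker0P; rewrite -dimv_eq0.
have := dim_eq h; have := mr t; lia.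
Qed.

Lemma min_up (r t : P) (h : (r <= t)%O) : (forall q, dimM r <= dimM q)%N ->
  (forall q, dimM t <= dimM q)%N.
Proof.
move=> mr q; have := dim_eq h; have := mr q; lia.
Qed.

Variables (p0 : P) (x0 : MO p0) (v : forall p, MO p).
Hypothesis p0min : forall q, (dimM p0 <= dimM q)%N.
Hypothesis vcomp : forall p q (h : (p <= q)%O), Fm h (v p) = v q.
Hypothesis vp0 : v p0 = x0.
Hypothesis x0nz : x0 != 0.

Lemma injU (a b : P) (h : (a <= b)%O) : (p0 <= a)%O -> injective (Fm h).
Proof. by move=> h0; apply: inj_min; apply: (min_up h0). Qed.

Lemma v_nz q : v q != 0.
Proof.
have [t [hqt hpt]] := dir q p0.
apply/eqP => vq0; move/negP: x0nz; apply; apply/eqP.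
apply: (injU (h:=hpt) (lexx p0)); rewrite linear0 -vp0 vcomp -(vcomp hqt) vq0 linear0 //.
Qed.

Definition E p (x : MO p) (hh : MO p0) :=
  exists t (h1 : (p <= t)%O) (h2 : (p0 <= t)%O), Fm h1 x = Fm h2 hh.

Lemma E_all (p : P) (x : MO p) (hh : MO p0) : E x hh -> forall s (h1 : (p <= s)%O) (h2 : (p0 <= s)%O),
  Fm h1 x = Fm h2 hh.
Proof.
case=> t [h1t [h2t Et]] s h1 h2.
have [u [htu hsu]] := dir t s.
apply: (injU (h:=hsu) h2).
rewrite -(Fm_comp h1 hsu (le_trans h1t htu)) -(Fm_comp h2 hsu (le_trans h2t htu)).
by rewrite (Fm_comp h1t htu) (Fm_comp h2t htu) Et.
Qed.

Definition rr p := sval (cid (dir p p0)).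
Lemma hr1 p : (p <= rr p)%O. Proof. exact: (proj1 (svalP (cid (dir p p0)))). Qed.
Lemma hr2 p : (p0 <= rr p)%O. Proof. exact: (proj2 (svalP (cid (dir p p0)))). Qed.

Definition H := (<[x0]>^C)%VS.
Definition C p : {vspace MO p} := (Fm (hr1 p) @^-1: (Fm (hr2 p) @: H))%VS.

Lemma memC (p : P) (x : MO p) : x \in C p <-> exists2 hh, hh \in H & E x hh.
Proof.
rewrite /C -memv_preim; split.
  by move/memv_imgP => [hh hhH eq]; exists hh => //; exists (rr p), (hr1 p), (hr2 p).
by case=> hh hhH HE; rewrite (E_all HE (hr1 p) (hr2 p)); apply: memv_img.
Qed.

Lemma E_v (p : P) (l : k) : E (l *: v p) (l *: x0).
Proof.
exists (rr p), (hr1 p), (hr2 p).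
by rewrite !linearZ /= vcomp -vp0 vcomp.
Qed.

Lemma E_unique (p : P) (x : MO p) (h1 h2 : MO p0) : E x h1 -> E x h2 -> h1 = h2.
Proof.
move=> E1 E2; apply: (injU (h:=hr2 p) (lexx p0)).
by rewrite -(E_all E1 (hr1 p) (hr2 p)) (E_all E2 (hr1 p) (hr2 p)).
Qed.

Lemma main_inh : has_summand_iso M (kP k P).
Proof.
pose N p := <[v p]>%VS.
pose phi p := linfun (scv (v p)).
have phiE : forall p a, phi p a = a *: v p.
  by move=> r a; rewrite /phi lfunE.
exists N, C, phi; split.
- move=> p q h; apply/subvP => y /memv_imgP [x /vlineP [l ->] ->].
  by rewrite linearZ /= vcomp; apply: memvZ; apply: memv_line.
- move=> p q h; apply/subvP => y /memv_imgP [x /memC [hh hhH HE] ->].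
  apply/memC; exists hh => //.
  have [t [hqt hpt]] := dir q p0.
  exists t, hqt, hpt.
  rewrite -(Fm_comp h hqt (le_trans h hqt)); exact: (E_all HE).
- move=> p; split.
  + apply/eqP; rewrite eqEsubv subvf /=; apply/subvP => x _.
    have [y Ey] := surj (hr2 p) (Fm (hr1 p) x).
    have : y \in (<[x0]> + H)%VS by rewrite /H addv_complf memvf.
    move/memv_addP => [u /vlineP [l ->] [hh hhH yE]].
    apply/memv_addP; exists (l *: v p); first by apply: memvZ; apply: memv_line.
    exists (x - l *: v p); last by rewrite addrC subrK.
    apply/memC; exists hh => //.
    exists (rr p), (hr1 p), (hr2 p).
    rewrite linearB linearZ /= (vcomp (hr1 p)) -Ey yE linearD linearZ /= -(vcomp (hr2 p)) vp0.
    by rewrite addrAC subrr add0r.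
  + apply/eqP; rewrite -subv0; apply/subvP => y /memv_capP [/vlineP [l ->] /memC [hh hhH HE]].
    have hl := E_unique HE (E_v p l).
    have : l *: x0 \in (<[x0]> :&: H)%VS.
      by apply/memv_capP; split; [apply: memvZ; apply: memv_line | rewrite -hl].
    rewrite /H capv_compl !memv0 scaler_eq0 (negbTE x0nz) orbF => /eqP ->.
    by rewrite scale0r.
- move=> p q h; apply/lfunP => a; rewrite !comp_lfunE !lfunE /=.
  by rewrite /scv linearZ /= vcomp.
- move=> p; split.
  + apply/eqP/lker0P => a b; rewrite !phiE => /eqP.
    rewrite -subr_eq0 -scalerBl scaler_eq0 (negbTE (v_nz p)) orbF subr_eq0 => /eqP //.
  + apply/eqP; rewrite eqEsubv; apply/andP; split; apply/subvP => y.
      by move/memv_imgP => [a _ ->]; rewrite phiE; apply: memvZ; apply: memv_line.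
    move/vlineP => [l ->]; have <- : phi p l = l *: v p by rewrite phiE.
    by apply: memv_img; apply: memvf.
Qed.

End Main.

Unset Implicit Arguments.
Set Strict Implicit.

Theorem lemma2p3 (k : fieldType) (d : Order.disp_t) (P : porderType d)
  (M : pfdmod k P) :
  directed P -> codirected P ->
  (forall p : P, (fullv : {vspace pm_obj M p}) != 0%VS) ->
  (forall (p q : P) (h : (p <= q)%O) (w : pm_obj M q),
      exists v : pm_obj M p, pm_map M h v = w) ->
  has_summand_iso M (kP k P).
Proof.
move=> dir codir nz surj.
case: (pselect (exists p : P, True)) => [[p1 _]|nP]; last first.
  exists (fun p => 0%VS), (fun p => 0%VS), (fun p => 0).
  by split => [p|p|p|p|p]; exfalso; apply: nP; exists p.
have [n [[p0 dp0] mn]] := @ex_min_nat (fun n => exists p, dimM M p = n) _ (ex_intro _ p1 erefl).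
have p0min : forall q, (dimM M p0 <= dimM M q)%N.
  by move=> q; rewrite dp0; apply: mn; exists q.
pose x0 := vpick (fullv : {vspace pm_obj M p0}).
have x0nz : x0 != 0 by rewrite /x0 vpick0 nz.
have [v [vcomp vp0]] := limit_exists codir surj x0.
exact: (main_inh dir surj p0min vcomp vp0 x0nz).
Qed.
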